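(* The family of logics $\mathrm{FO}$ is $\mathbb{T}^\times$-compositional and also $\mathbb{T}$-compositional.
   Context: Sorts are $\Xi=\omega$ (arities). For an $\omega$-sorted family of partial orders $A$ and $n<\omega$, $\mathbb{T}^\times_nA$ is the set of finite or infinite trees with ordered successors labelled by elements of $A$ or variables $x_0,\dots,x_{n-1}$ (arity $0$), where a vertex with label in $A_k$ has exactly $k$ successors, variables label leaves only, and the root is labelled by an element of $A$; ordered by same shape and vertexwise comparison of labels. $\mathbb{T}A\subseteq\mathbb{T}^\times A$ consists of the trees using each variable at most once. $\mathbb{T}^\times$ is a monad with $\mathrm{sing}(a)=a(x_0,\dots,x_{n-1})$ and $\mathrm{flat}$ given by substituting, for each vertex $v$ of a tree of trees, the tree $T(v)$ with its $x_i$-leaves linked to the root of the tree at the $(i+1)$-st successor of $v$ and unravelling; $\mathbb{T}$ is a submonad. For an alphabet (finite unordered set) $\Sigma$, a tree $t$ of sort $n$ is identified with the structure $\langle\mathrm{dom}(t),\preceq,(S_i)_{i<\omega},(P_c)_{c\in\Sigma},(Q_i)_{i<n},R\rangle$ (tree order, successor relations, label predicates, variable predicates, root). FO is the family of logics assigning to $\Sigma$ the first-order sentences over this signature, a sentence of sort $n$ being evaluated on trees of sort $n$. For a monad $\mathbb{M}\in\{\mathbb{T},\mathbb{T}^\times\}$ and a set $\Delta$ of formulae, $s\sqsubseteq_\Delta t$ iff every formula in $\Delta$ satisfied by $s$ is satisfied by $t$. A preorder $\sqsubseteq$ on $\mathbb{M}\Sigma$ is a congruence ordering if $\mathbb{M}q(S)\leq\mathbb{M}q(T)$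 implies $\mathrm{flat}(S)\sqsubseteq\mathrm{flat}(T)$ for $S,T\in\mathbb{M}\mathbb{M}\Sigma$, $q$ the quotient map onto the ordered set of classes. A family of logics $L$ is $\mathbb{M}$-compositional if for every finite subfamily $\Phi$ (finitely many formulae per alphabet) there is $\Delta$ with $\Phi\subseteq\Delta\subseteq L$, finite in each sort for each alphabet up to equivalence, such that $\sqsubseteq_{\Delta[\Sigma]}$ is a congruence ordering on $\mathbb{M}\Sigma$ for every alphabet $\Sigma$. *)

(* Defs.v *)
From mathcomp Require Import all_boot.
From Stdlib Require List.
Set Implicit Arguments. Unset Strict Implicit. Unset Printing Implicit Defensive.

Record alphabet := Alphabet { letter :> finType; arity : letter -> nat }.

(* Raw labelled trees: a vertex is an address (seq nat, the i-th successor
   of w is rcons w i); a label is a letter (inl) or a variable x_i (inr i);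
   None = not a vertex. *)
Definition rtree (L : Type) := seq nat -> option (L + nat).

Definition wf_tree (L : Type) (ar : L -> nat) (n : nat) (t : rtree L) : Prop :=
  (exists a, t [::] = Some (inl a)) /\
  forall w, match t w with
            | Some (inl a) => forall i, t (rcons w i) <> None <-> i < ar a
            | Some (inr j) => j < n /\ forall i, t (rcons w i) = None
            | None => forall i, t (rcons w i) = None
            end.

(* Linear trees (monad T): each variable is used at most once. *)
Definition linear (L : Type) (t : rtree L) : Prop :=
  forall i v w, t v = Some (inr i) -> t w = Some (inr i) -> v = w.

(* t in M Sigma of sort n; lin = true for M = T, lin = false for M = T^x. *)
Definition inM (lin : bool) (S : alphabet) (n : nat) (t : rtree S) : Prop :=
  wf_tree (@arity S) n t /\ (lin -> linear t).

(* Trees of trees: a label of sort k is a pair (k, s) with s a tree of sort k. *)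
Definition rtree2 (S : alphabet) := rtree (nat * rtree S).

Definition inMM (lin : bool) (S : alphabet) (m : nat) (T : rtree2 S) : Prop :=
  wf_tree fst m T /\ (lin -> linear T) /\
  forall w k s, T w = Some (inl (k, s)) -> inM lin k s.

Inductive fstate := FNode of seq nat & seq nat | FVarS of nat.

(* position p in the inner tree at outer vertex u; a variable x_i is replaced
   by the root of the tree at the i-th successor of u (or by the variable of
   the outer tree labelling that successor). *)
Definition resolve (S : alphabet) (T : rtree2 S) (u p : seq nat) : option fstate :=
  match T u with
  | Some (inl (_, s)) =>
      match s p with
      | Some (inl _) => Some (FNode u p)
      | Some (inr i) =>
          match T (rcons u i) with
          | Some (inl _) => Some (FNode (rcons u i) [::])
          | Some (inr j) => Some (FVarS j)
          | None => None
          end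
      | None => None
      end
  | _ => None
  end.

Definition flat_state (S : alphabet) (T : rtree2 S) (w : seq nat) : option fstate :=
  foldl (fun st c => match st with
                     | Some (FNode u p) => resolve T u (rcons p c)
                     | _ => None
                     end) (resolve T [::] [::]) w.

Definition flat (S : alphabet) (T : rtree2 S) : rtree S := fun w =>
  match flat_state T w with
  | Some (FNode u p) =>
      match T u with
      | Some (inl (_, s)) =>
          match s p with Some (inl a) => Some (inl a) | _ => None end
      | _ => None
      end
  | Some (FVarS j) => Some (inr j)
  | None => None
  end.

(* Signature: tree order (prefix order, root minimal), successor relations
   S_i (i < omega), label predicates P_c (c in Sigma), variable predicates
   Q_i, root predicate R, and equality. *)
Inductive fo (S : Type) :=
| FLe of nat & nat
| FSucc of nat & nat & nat    (* FSucc i x y : y is the i-th successor of x *)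
| FLab of S & nat
| FQ of nat & nat
| FRoot of nat
| FEq of nat & nat
| FNot of fo S
| FAnd of fo S & fo S
| FEx of nat & fo S.

Fixpoint fo_fv (S : Type) (f : fo S) : seq nat :=
  match f with
  | FLe x y | FSucc _ x y | FEq x y => [:: x; y]
  | FLab _ x | FQ _ x | FRoot x => [:: x]
  | FNot g => fo_fv g
  | FAnd g h => fo_fv g ++ fo_fv h
  | FEx x g => filter (fun z => z != x) (fo_fv g)
  end.

Fixpoint fo_sort_ok (S : Type) (n : nat) (f : fo S) : bool :=
  match f with
  | FQ i _ => i < n
  | FNot g | FEx _ g => fo_sort_ok n g
  | FAnd g h => fo_sort_ok n g && fo_sort_ok n h
  | _ => true
  end.

Definition FO (S : alphabet) (n : nat) (f : fo S) : Prop :=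
  fo_fv f = [::] /\ fo_sort_ok n f.

Fixpoint sat (S : alphabet) (t : rtree S) (nu : nat -> seq nat) (f : fo S) : Prop :=
  match f with
  | FLe x y => prefix (nu x) (nu y)
  | FSucc i x y => nu y = rcons (nu x) i
  | FLab c x => t (nu x) = Some (inl c)
  | FQ i x => t (nu x) = Some (inr i)
  | FRoot x => nu x = [::]
  | FEq x y => nu x = nu y
  | FNot g => ~ sat t nu g
  | FAnd g h => sat t nu g /\ sat t nu h
  | FEx x g => exists v, t v <> None /\
                 sat t (fun z => if z == x then v else nu z) g
  end.

(* truth of a sentence (the assignment is irrelevant for sentences) *)
Definition holds (S : alphabet) (t : rtree S) (f : fo S) : Prop :=
  sat t (fun _ => [::]) f.

Definition sqle (S : alphabet) (D : fo S -> Prop) (s t : rtree S) : Prop :=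
  forall f, D f -> holds s f -> holds t f.

(* M q (T1) <= M q (T2), q the sortwise quotient of (M Sigma, [=_D) onto its
   ordered set of classes: same shape, equal variables, and at each letter
   vertex the two labels have the same sort k and their classes compare. *)
Definition lift_le (S : alphabet) (D : nat -> fo S -> Prop) (T1 T2 : rtree2 S) : Prop :=
  forall w, match T1 w, T2 w with
            | None, None => True
            | Some (inr i), Some (inr j) => i = j
            | Some (inl (k, s)), Some (inl (k', s')) => k = k' /\ sqle (D k) s s'
            | _, _ => False
            end.

Definition congruence_ordering (lin : bool) (S : alphabet) (D : nat -> fo S -> Prop) : Prop :=
  forall m (T1 T2 : rtree2 S), inMM lin m T1 -> inMM lin m T2 ->
    lift_le D T1 T2 -> sqle (D m) (flat T1) (flat T2).

Definition fo_equiv (lin : bool) (S : alphabet) (n : nat) (f g : fo S) : Prop :=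
  forall t, inM lin n t -> (holds t f <-> holds t g).

Definition FO_compositional (lin : bool) : Prop :=
  forall Phi : forall S : alphabet, nat -> fo S -> Prop,
    (forall S : alphabet, exists l : seq (nat * fo S),
        forall n f, Phi S n f -> List.In (n, f) l) ->
    (forall (S : alphabet) n f, Phi S n f -> FO n f) ->
    exists Delta : forall S : alphabet, nat -> fo S -> Prop,
      [/\ (forall (S : alphabet) n f, Phi S n f -> Delta S n f),
          (forall (S : alphabet) n f, Delta S n f -> FO n f),
          (forall (S : alphabet) n, exists l : seq (fo S),
              forall f, Delta S n f -> exists2 g, List.In g l & fo_equiv lin n f g)
        & (forall S : alphabet, congruence_ordering lin (Delta S))].

(* Main.v *)
Require Import Defs.
From mathcomp Require Import all_boot.
From Stdlib Require Import Classical ClassicalEpsilon.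
Set Implicit Arguments. Unset Strict Implicit. Unset Printing Implicit Defensive.
Set Warnings "-notation-overridden".

Definition pb (P : Prop) : bool := if excluded_middle_informative P then true else false.
Lemma pbP P : reflect P (pb P).
Proof. by rewrite /pb; case: excluded_middle_informative => h; constructor. Qed.

Definition upd (nu : nat -> seq nat) x v := fun z => if z == x then v else nu z.
Definition addv (b : nat -> bool) x := fun z => (z == x) || b z.

Section Logic.
Variable S : alphabet.
Variables V B : nat.

Fixpoint qr (f : fo S) : nat :=
  match f with FNot g => qr g | FAnd g h => maxn (qr g) (qr h) | FEx _ g => (qr g).+1 | _ => 0 end.

Fixpoint good (f : fo S) : bool :=
  match f with
  | FLe x y | FEq x y => (x < V) && (y < V)
  | FSucc i x y => [&& i < B, x < V & y < V]
  | FLab _ x | FQ _ x | FRoot x => x < V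
  | FNot g => good g
  | FAnd g h => good g && good h
  | FEx x g => (x < V) && good g
  end.

Definition atom_ok n (a : fo S) : bool :=
  match a with
  | FLe x y | FEq x y => (x < V) && (y < V)
  | FSucc i x y => [&& i < B, x < V & y < V]
  | FLab _ x | FRoot x => x < V
  | FQ i x => (i < n) && (x < V)
  | _ => false
  end.

Fixpoint E n r (b : nat -> bool) (t1 : rtree S) nu1 (t2 : rtree S) nu2 : Prop :=
  (forall a, atom_ok n a -> all b (fo_fv a) -> (sat t1 nu1 a <-> sat t2 nu2 a)) /\
  match r with
  | 0 => True
  | r'.+1 => forall x, x < V ->
     (forall v, t1 v <> None -> exists2 v', t2 v' <> None &
         E n r' (addv b x) t1 (upd nu1 x v) t2 (upd nu2 x v')) /\
     (forall v', t2 v' <> None -> exists2 v, t1 v <> None &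
         E n r' (addv b x) t1 (upd nu1 x v) t2 (upd nu2 x v'))
  end.

Lemma sat_ext (t : rtree S) f : forall nu nu',
  (forall z, z \in fo_fv f -> nu z = nu' z) -> (sat t nu f <-> sat t nu' f).
Proof.
elim: f => /=.
- by move=> x y nu nu' h; rewrite !h ?inE ?eqxx ?orbT.
- by move=> i x y nu nu' h; rewrite !h ?inE ?eqxx ?orbT.
- by move=> c x nu nu' h; rewrite !h ?inE ?eqxx ?orbT.
- by move=> i x nu nu' h; rewrite !h ?inE ?eqxx ?orbT.
- by move=> x nu nu' h; rewrite !h ?inE ?eqxx ?orbT.
- by move=> x y nu nu' h; rewrite !h ?inE ?eqxx ?orbT.
- by move=> g IH nu nu' h; rewrite (IH nu nu').
- move=> g IHg h IHh nu nu' e.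
  rewrite (IHg nu nu') ?(IHh nu nu') // => z hz; apply: e; rewrite mem_cat hz ?orbT //.
- move=> x g IH nu nu' e; split => -[v [hv hs]]; exists v; split => //.
  + apply/(IH _ (fun z => if z == x then v else nu z)) => // z hz.
    case: eqP => // /eqP zx; symmetry; apply: e; by rewrite mem_filter zx.
  + apply/(IH _ (fun z => if z == x then v else nu' z)) => // z hz.
    case: eqP => // /eqP zx; apply: e; by rewrite mem_filter zx.
Qed.

Lemma E_ext n r : forall b t1 nu1 t2 nu2 nu1' nu2',
  E n r b t1 nu1 t2 nu2 -> (forall z, b z -> nu1 z = nu1' z) -> (forall z, b z -> nu2 z = nu2' z) ->
  E n r b t1 nu1' t2 nu2'.
Proof.
elim: r => [|r IH] b t1 nu1 t2 nu2 nu1' nu2' [hA hF] e1 e2; split.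
- move=> a ha hb; rewrite -(sat_ext t1 (nu:=nu1)) -?(sat_ext t2 (nu:=nu2)); first exact: hA.
  + by move=> z hz; apply: e2; apply: (allP hb).
  + by move=> z hz; apply: e1; apply: (allP hb).
- by [].
- move=> a ha hb; rewrite -(sat_ext t1 (nu:=nu1)) -?(sat_ext t2 (nu:=nu2)); first exact: hA.
  + by move=> z hz; apply: e2; apply: (allP hb).
  + by move=> z hz; apply: e1; apply: (allP hb).
- move=> x hx; have [f1 f2] := hF x hx; split.
  + move=> v hv; have [v' hv' he] := f1 v hv; exists v' => //.
    apply: IH he _ _ => z; rewrite /addv /upd; case: eqP => //= _; [exact: e1|exact: e2].
  + move=> v' hv'; have [v hv he] := f2 v' hv'; exists v => //.
    apply: IH he _ _ => z; rewrite /addv /upd; case: eqP => //= _; [exact: e1|exact: e2].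
Qed.

Lemma E_restr n r : forall (b b' : nat -> bool) t1 nu1 t2 nu2,
  E n r b t1 nu1 t2 nu2 -> (forall z, b' z -> b z) -> E n r b' t1 nu1 t2 nu2.
Proof.
elim: r => [|r IH] b b' t1 nu1 t2 nu2 [hA hF] sb; split.
- move=> a ha hb; apply: hA => //; apply/allP => z hz; apply: sb; exact: (allP hb).
- by [].
- move=> a ha hb; apply: hA => //; apply/allP => z hz; apply: sb; exact: (allP hb).
- move=> x hx; have [f1 f2] := hF x hx; split.
  + move=> v hv; have [v' hv' he] := f1 v hv; exists v' => //.
    apply: IH he _ => z; rewrite /addv; case: eqP => //= _; exact: sb.
  + move=> v' hv'; have [v hv he] := f2 v' hv'; exists v => //.
    apply: IH he _ => z; rewrite /addv; case: eqP => //= _; exact: sb.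
Qed.

Lemma E_mono n r : forall b t1 nu1 t2 nu2, E n r.+1 b t1 nu1 t2 nu2 -> E n r b t1 nu1 t2 nu2.
Proof.
elim: r => [|r IH] b t1 nu1 t2 nu2 [hA hF]; split => //.
move=> x hx; have [f1 f2] := hF x hx; split.
- move=> v hv; have [v' hv' he] := f1 v hv; exists v' => //; exact: IH.
- move=> v' hv'; have [v hv he] := f2 v' hv'; exists v => //; exact: IH.
Qed.

Lemma E_monoN n r r' b t1 nu1 t2 nu2 : r <= r' -> E n r' b t1 nu1 t2 nu2 -> E n r b t1 nu1 t2 nu2.
Proof.
move=> /subnK <-; elim: (r' - r) => [|d IH] //= h; apply: IH; exact: E_mono.
Qed.

Lemma E_sym n r : forall b t1 nu1 t2 nu2, E n r b t1 nu1 t2 nu2 -> E n r b t2 nu2 t1 nu1.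
Proof.
elim: r => [|r IH] b t1 nu1 t2 nu2 [hA hF]; split.
- by move=> a ha hb; symmetry; apply: hA.
- by [].
- by move=> a ha hb; symmetry; apply: hA.
- move=> x hx; have [f1 f2] := hF x hx; split.
  + move=> v hv; have [v' hv' he] := f2 v hv; exists v' => //; exact: IH.
  + move=> v' hv'; have [v hv he] := f1 v' hv'; exists v => //; exact: IH.
Qed.

Lemma E_at n r b t1 nu1 t2 nu2 : E n r b t1 nu1 t2 nu2 ->
  forall a, atom_ok n a -> all b (fo_fv a) -> (sat t1 nu1 a <-> sat t2 nu2 a).
Proof. by case: r => [|r] []. Qed.

Lemma E_sat n f : forall r b t1 nu1 t2 nu2, good f -> fo_sort_ok n f -> qr f <= r ->
  all b (fo_fv f) -> E n r b t1 nu1 t2 nu2 -> (sat t1 nu1 f <-> sat t2 nu2 f).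
Proof.
elim: f.
- by move=> x y r b t1 nu1 t2 nu2 g _ _ hb /E_at hA; apply: hA.
- by move=> i x y r b t1 nu1 t2 nu2 g _ _ hb /E_at hA; apply: hA.
- by move=> c x r b t1 nu1 t2 nu2 g _ _ hb /E_at hA; apply: hA.
- by move=> i x r b t1 nu1 t2 nu2 g so _ hb /E_at hA; apply: hA => //=; move: so g => /= -> ->.
- by move=> x r b t1 nu1 t2 nu2 g _ _ hb /E_at hA; apply: hA.
- by move=> x y r b t1 nu1 t2 nu2 g _ _ hb /E_at hA; apply: hA.
- by move=> g IH r b t1 nu1 t2 nu2 /= hg so hq hb he; rewrite (IH r b t1 nu1 t2 nu2).
- move=> g IHg h IHh r b t1 nu1 t2 nu2 /= /andP[gg gh] /andP[sg sh].
  rewrite geq_max all_cat => /andP[qg qh] /andP[bg bh] he.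
  by rewrite (IHg r b t1 nu1 t2 nu2) ?(IHh r b t1 nu1 t2 nu2).
- move=> x g IH [|r] b t1 nu1 t2 nu2 /= /andP[hx gg] so hq hb [hA hF] //.
  have hb' : all (addv b x) (fo_fv g).
    apply/allP => z hz; rewrite /addv; case: eqP => //= /eqP zx.
    by apply: (allP hb); rewrite mem_filter zx.
  have [f1 f2] := hF x hx; split.
  + move=> [v [hv hs]]; have [v' hv' he] := f1 v hv; exists v'; split => //.
    by apply/(IH r (addv b x) t1 (upd nu1 x v) t2 (upd nu2 x v')).
  + move=> [v' [hv' hs]]; have [v hv he] := f2 v' hv'; exists v; split => //.
    by apply/(IH r (addv b x) t1 (upd nu1 x v) t2 (upd nu2 x v')).
Qed.

End Logic.
Section Index.
Variables (S : alphabet) (V B n : nat).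
Notation E := (E V B).
Notation atom_ok := (atom_ok V B).
Notation good := (good V B).

Definition code : finType := (('I_V * 'I_V + 'I_V * 'I_V + 'I_B * 'I_V * 'I_V + letter S * 'I_V + 'I_n * 'I_V + 'I_V))%type.

Definition dec (c : code) : fo S :=
  match c with
  | inl (inl (inl (inl (inl (x, y))))) => FLe S x y
  | inl (inl (inl (inl (inr (x, y))))) => FEq S x y
  | inl (inl (inl (inr (i, x, y)))) => FSucc S i x y
  | inl (inl (inr (c, x))) => FLab c x
  | inl (inr (i, x)) => FQ S i x
  | inr x => FRoot S x
  end.

Lemma dec_good c : [&& atom_ok n (dec c), good (dec c), fo_sort_ok n (dec c) & qr (dec c) == 0].
Proof. by case: c => [[[[[[x y]|[x y]]|[[i x] y]]|[c x]]|[i x]]|x] /=; rewrite ?ltn_ord. Qed.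

Lemma dec_onto a : atom_ok n a -> exists c, dec c = a.
Proof.
case: a => //=.
- move=> x y /andP[hx hy]; by exists (inl (inl (inl (inl (inl (Ordinal hx, Ordinal hy)))))).
- move=> i x y /and3P[hi hx hy]; by exists (inl (inl (inl (inr (Ordinal hi, Ordinal hx, Ordinal hy))))).
- move=> c x hx; by exists (inl (inl (inr (c, Ordinal hx)))).
- move=> i x /andP[hi hx]; by exists (inl (inr (Ordinal hi, Ordinal hx))).
- move=> x hx; by exists (inr (Ordinal hx)).
- move=> x y /andP[hx hy]; by exists (inl (inl (inl (inl (inr (Ordinal hx, Ordinal hy)))))).
Qed.

Definition F0 : finType := {ffun code -> bool}.

Fixpoint idx (r : nat) : finType :=
  match r with 0 => F0 | r'.+1 => (F0 * {ffun 'I_V -> {set idx r'}})%type end.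

Definition idx0 (b : nat -> bool) (t : rtree S) nu : F0 :=
  [ffun c => all b (fo_fv (dec c)) && pb (sat t nu (dec c))].

Fixpoint index r b t nu : idx r :=
  match r as r0 return idx r0 with
  | 0 => idx0 b t nu
  | r'.+1 => (idx0 b t nu, [ffun x : 'I_V => [set j | pb (exists2 v, t v <> None & index r' (addv b x) t (upd nu x v) = j)]])
  end.

Definition dflt : fo S := FNot (FEx 0 (FNot (FEq S 0 0))).
Definition bigand (l : seq (fo S)) : fo S :=
  match l with [::] => dflt | a :: l' => foldl (@FAnd S) a l' end.

Arguments bigand : simpl never.

Lemma sat_foldl t nu l : forall a, sat t nu (foldl (@FAnd S) a l) <-> (sat t nu a /\ forall f, List.In f l -> sat t nu f).
Proof.
elim: l => [|g l IH] a /=; first by split => [h|[]] //.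
rewrite IH /=; split.
- by move=> [[ha hg] hl]; split => // f [<-|hf] //; apply: hl.
- by move=> [ha hl]; split; [split => //; apply: hl; left | move=> f hf; apply: hl; right].
Qed.

Lemma sat_bigand t nu l : sat t nu (bigand l) <-> forall f, List.In f l -> sat t nu f.
Proof.
case: l => [|a l] /=.
- split => // _ [v [_ h]]; exact: h.
- rewrite sat_foldl; split.
  + by move=> [ha hl] f [<-|hf] //; apply: hl.
  + by move=> h; split; [apply: h; left | move=> f hf; apply: h; right].
Qed.

Lemma In_map (T : eqType) (g : T -> fo S) s f : List.In f (map g s) <-> exists2 c, c \in s & f = g c.
Proof.
elim: s => [|c s IH] /=; first by split => // -[].
rewrite IH; split.
- by move=> [<-|[c' hc ->]]; [exists c; rewrite ?inE ?eqxx | exists c'; rewrite // inE hc orbT].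
- move=> [c' ]; rewrite inE => /orP[/eqP ->|hc] ->; [by left | by right; exists c'].
Qed.

Lemma sat_bigand_map (T : eqType) (g : T -> fo S) s t nu :
  sat t nu (bigand (map g s)) <-> forall c, c \in s -> sat t nu (g c).
Proof.
rewrite sat_bigand; split.
- move=> h c hc; apply: h; apply/In_map; by exists c.
- move=> h f /In_map [c hc ->]; exact: h.
Qed.

Definition lits b (i : F0) : seq (fo S) :=
  [seq (if i c then dec c else FNot (dec c)) | c <- enum code & all b (fo_fv (dec c))].

Fixpoint H r b : idx r -> fo S :=
  match r as r0 return idx r0 -> fo S with
  | 0 => fun i => bigand (lits b i)
  | r'.+1 => fun i => FAnd (bigand (lits b i.1))
       (bigand [seq FAnd (FNot (FEx (nat_of_ord x) (bigand (FEq S x x :: [seq FNot (@H r' (addv b x) j) | j <- enum (i.2 x)]))))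
                         (bigand [seq FEx (nat_of_ord x) (@H r' (addv b x) j) | j <- enum (i.2 x)]) | x <- enum 'I_V])
  end.

Lemma idx0_eq b t nu t' nu' : idx0 b t' nu' = idx0 b t nu <->
  forall c, all b (fo_fv (dec c)) -> (sat t' nu' (dec c) <-> sat t nu (dec c)).
Proof.
split.
- move=> /ffunP e c hc; move: (e c); rewrite !ffunE hc /=.
  by do 2 case: pbP => //.
- move=> h; apply/ffunP => c; rewrite !ffunE; case hc: (all _ _) => //=.
  have := h c hc; case: pbP => h1; case: pbP => h2 // [f g].
  + by case: h2; apply: f.
  + by case: h1; apply: g.
Qed.

Lemma lits_sat b t nu t' nu' : sat t' nu' (bigand (lits b (idx0 b t nu))) <->
  forall c, all b (fo_fv (dec c)) -> (sat t' nu' (dec c) <-> sat t nu (dec c)).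
Proof.
rewrite /lits sat_bigand_map; split.
- move=> h c hc; move: (h c); rewrite mem_filter hc mem_enum /= ffunE hc /=.
  case: pbP => hs /(_ isT) //= hs'; tauto.
- move=> h c; rewrite mem_filter mem_enum andbT => hc /=; rewrite ffunE hc /=.
  case: pbP => hs /=; have := h c hc; tauto.
Qed.

Lemma HL r : forall b t nu t' nu', sat t' nu' (@H r b (index r b t nu)) <-> index r b t' nu' = index r b t nu.
Proof.
elim: r => [|r IH] b t nu t' nu'.
- by rewrite /= lits_sat idx0_eq.
- rewrite /= lits_sat -idx0_eq -map_comp sat_bigand_map; split.
  + move=> [e0 hx]; congr pair => //; apply/ffunP => x; rewrite !ffunE; apply/setP => j; rewrite !inE.
    have hxx : x \in Finite.enum (ordinal V) by rewrite -enumT mem_enum.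
    have := hx x hxx; rewrite /= !ffunE => -[hall]; rewrite sat_bigand_map => hex.
    apply/pbP/pbP.
    * move=> [v' hv' <-]; apply: NNPP => hn; apply: hall; exists v'; split => //.
      rewrite sat_bigand => f /= [<-|] //.
      move=> /In_map [j' ]; rewrite mem_enum inE => /pbP [v hv ej] -> /=.
      rewrite -ej; move/(IH _ _ _ t' (upd nu' x v')) => e; apply: hn; exists v => //.
    * move=> hj; have := hex j; rewrite mem_enum inE => /(_ (introT (pbP _) hj)) /=.
      move=> [v' [hv' hs]]; exists v' => //.
      case: hj => v hv ej; rewrite -ej in hs *; exact/(IH _ _ _ t' (upd nu' x v')).
  + case=> e0 /ffunP ef; split => // x _ /=; split.
    * move=> [v' [hv']]; rewrite sat_bigand => h.
      have : index r (addv b x) t' (upd nu' x v') \in (index r.+1 b t nu).2 x.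
        rewrite /= -ef ffunE inE; apply/pbP; by exists v'.
      rewrite /= ffunE inE => /pbP [v hv ej].
      have := h (FNot (@H r (addv b x) (index r (addv b x) t (upd nu x v)))); apply.
        right; apply/In_map; exists (index r (addv b x) t (upd nu x v)) => //.
        rewrite mem_enum ffunE inE; apply/pbP; by exists v.
      by apply/(IH _ _ _ t' (upd nu' x v')).
    * rewrite sat_bigand_map => j; rewrite mem_enum => hj /=.
      have := hj; rewrite -ef ffunE inE => /pbP [v' hv' ej]; exists v'; split => //.
      move: hj; rewrite ffunE inE => /pbP [v hv ej']; rewrite -ej'.
      apply/(IH _ _ _ t' (upd nu' x v')); by rewrite ej ej'.
Qed.

Lemma index_E r : forall b t1 nu1 t2 nu2, index r b t1 nu1 = index r b t2 nu2 -> E n r b t1 nu1 t2 nu2.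
Proof.
have hat : forall b t1 nu1 t2 nu2, idx0 b t1 nu1 = idx0 b t2 nu2 ->
    forall a, atom_ok n a -> all b (fo_fv a) -> (sat t1 nu1 a <-> sat t2 nu2 a).
  move=> b t1 nu1 t2 nu2 /idx0_eq h a ha hb; have [c ec] := dec_onto ha; subst a; exact: h.
elim: r => [|r IH] b t1 nu1 t2 nu2 /=; first by move=> e; split => //; exact: hat.
case=> e0 /ffunP ef; split; first exact: hat.
move=> x hx; have := ef (Ordinal hx); rewrite !ffunE /= => /setP es; split.
- move=> v hv; have := es (index r (addv b x) t1 (upd nu1 x v)); rewrite !inE.
  case: pbP => [_|[]]; last by exists v.
  move=> /esym /pbP [v' hv' ej]; exists v' => //; apply: IH; by rewrite ej.
- move=> v' hv'; have := es (index r (addv b x) t2 (upd nu2 x v')); rewrite !inE.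
  have h2 : pb (exists2 v, t2 v <> None & index r (addv b x) t2 (upd nu2 x v) = index r (addv b x) t2 (upd nu2 x v')).
    by apply/pbP; exists v'.
  rewrite h2 => /pbP [v hv ej]; exists v => //; apply: IH; by rewrite ej.
Qed.


Lemma In_cons_map (T : eqType) (g : T -> fo S) a s f : List.In f (a :: map g s) -> f = a \/ exists2 c, c \in s & f = g c.
Proof. by move=> /= [<-|/In_map h]; [left|right]. Qed.

Lemma bigand_prop (P : fo S -> Prop) l : P dflt -> (forall a b, P a -> P b -> P (FAnd a b)) ->
  (forall f, List.In f l -> P f) -> P (bigand l).
Proof.
move=> hd hA; case: l => [|a l] //= h; rewrite /bigand.
have : P a by apply: h; left.
have : forall f, List.In f l -> P f by move=> f hf; apply: h; right.
elim: l a {h} => [|c l IH] a //= hl ha; apply: IH; first by move=> f hf; apply: hl; right.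
by apply: hA => //; apply: hl; left.
Qed.

Lemma qr_bigand l k : (l <> [::] \/ 0 < k) -> (forall f, List.In f l -> qr f <= k) -> qr (bigand l) <= k.
Proof.
case: l => [|a l] hk h.
- by case: hk.
- rewrite /bigand; have : qr a <= k by apply: h; left.
  have : forall f, List.In f l -> qr f <= k by move=> f hf; apply: h; right.
  elim: l a {h hk} => [|c l IH] a //= hl ha; apply: IH; first by move=> f hf; apply: hl; right.
  by rewrite /= geq_max ha; apply: hl; left.
Qed.

Lemma lits_qr b i f : List.In f (lits b i) -> qr f = 0.
Proof.
move=> /In_map [c _ ->]; have /and4P[_ _ _ /eqP q] := dec_good c; by case: (i c).
Qed.

Lemma H_qr r : forall (b : pred nat) (i : idx r), (0 < r \/ exists2 y, y < V & b y) -> qr (H b i) <= r.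
Proof.
elim: r => [|r IH] b i h /=.
- case: h => // -[y hy hby]; apply: qr_bigand; last by move=> f /lits_qr ->.
  left; rewrite /lits; set c0 : code := inr (Ordinal hy).
  have : c0 \in [seq c <- enum code | all b (fo_fv (dec c))] by rewrite mem_filter mem_enum /= hby.
  by case: [seq c <- enum code | _].
- rewrite geq_max; apply/andP; split.
  + apply: qr_bigand; first by right. by move=> f /lits_qr ->.
  + apply: qr_bigand; first by right.
    move=> f /In_map [x _ ->] /=; rewrite geq_max; apply/andP; split.
    * rewrite ltnS; apply: qr_bigand; first by left.
      move=> g /In_cons_map [->|[j _ ->]] //=; apply: IH; right; exists x => //.
      by rewrite /addv eqxx.
    * apply: qr_bigand; first by right.
      move=> g /In_map [j _ ->] /=; rewrite ltnS; apply: IH; right; exists x => //.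
      by rewrite /addv eqxx.
Qed.

Lemma H_fv r : forall (b : pred nat) (i : idx r), all b (fo_fv (H b i)).
Proof.
have hd : forall b : pred nat, all b (fo_fv dflt) by [].
have hA : forall (b : pred nat) (a a' : fo S), all b (fo_fv a) -> all b (fo_fv a') -> all b (fo_fv (FAnd a a')).
  by move=> b a a' h1 h2; rewrite /= all_cat h1.
have hl : forall (b : pred nat) i f, List.In f (lits b i) -> all b (fo_fv f).
  by move=> b i f /In_map [c]; rewrite mem_filter => /andP[hc _] ->; case: (i c).
have hEx : forall (b : pred nat) (x : nat) (g : fo S), all (addv b x) (fo_fv g) -> all b (fo_fv (FEx x g)).
  move=> b x g h; apply/allP => z; rewrite /= mem_filter => /andP[zx hz].
  by move: (allP h z hz); rewrite /addv (negbTE zx).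
elim: r => [|r IH] b i /=.
- apply: (@bigand_prop (fun f => all b (fo_fv f)) (lits b i)); [exact: hd|exact: hA|exact: hl].
- eapply hA; first by apply: (@bigand_prop (fun f => all b (fo_fv f)) (lits b i.1)); [exact: hd|exact: hA|exact: hl].
  apply: (@bigand_prop (fun f => all b (fo_fv f))); [exact: hd|exact: hA|].
  move=> f /In_map [x _ ->]; eapply hA.
  + eapply hEx; apply: (@bigand_prop (fun f => all (addv b x) (fo_fv f))); [exact: hd|exact: hA|].
    move=> g /In_cons_map [->|[j _ ->]] /=; last exact: IH.
    by rewrite /addv eqxx.
  + apply: (@bigand_prop (fun f => all b (fo_fv f))); [exact: hd|exact: hA|].
    move=> g /In_map [j _ ->]; eapply hEx; exact: IH.
Qed.

Lemma H_good r : 0 < V -> forall (b : pred nat) (i : idx r), good (H b i) && fo_sort_ok n (H b i).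
Proof.
move=> hV.
have hd : good dflt && fo_sort_ok n dflt by rewrite /= hV.
have hA : forall a a' : fo S, good a && fo_sort_ok n a -> good a' && fo_sort_ok n a' -> good (FAnd a a') && fo_sort_ok n (FAnd a a').
  by move=> a a' /andP[g1 s1] /andP[g2 s2]; rewrite /= g1 g2 s1 s2.
have hl : forall (b : pred nat) (i : F0) (f : fo S), List.In f (lits b i) -> good f && fo_sort_ok n f.
  by move=> b i f /In_map [c _ ->]; have /and4P[_ g s _] := dec_good c; case: (i c) => /=; rewrite g s.
elim: r => [|r IH] b i /=.
- apply: (@bigand_prop (fun f => good f && fo_sort_ok n f) (lits b i)) => //; exact: hl.
- eapply hA; first by apply: (@bigand_prop (fun f => good f && fo_sort_ok n f) (lits b i.1)) => //; exact: hl.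
  apply: (@bigand_prop (fun f => good f && fo_sort_ok n f)) => // f /In_map [x _ ->]; eapply hA.
  + rewrite /= ltn_ord /=; apply: (@bigand_prop (fun f => good f && fo_sort_ok n f)) => //.
    move=> g /In_cons_map [->|[j _ ->]] /=; first by rewrite ltn_ord.
    exact: IH.
  + apply: (@bigand_prop (fun f => good f && fo_sort_ok n f)) => // g /In_map [j _ ->].
    rewrite /= ltn_ord /=; exact: IH.
Qed.

End Index.
Section WF.
Variables (L : Type) (ar : L -> nat) (n : nat) (t : rtree L).
Hypothesis wf : wf_tree ar n t.

Lemma wf_root : exists a, t [::] = Some (inl a).
Proof. by case: wf. Qed.

Lemma wf_parent w c : t (rcons w c) <> None -> exists a, t w = Some (inl a).
Proof.
case: wf => _ h hc; move: (h w); case: (t w) => [[a|j]|] ha; first by exists a.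
- by case: ha => _ /(_ c).
- by move: (ha c).
Qed.

Lemma wf_leaf w j : t w = Some (inr j) -> forall e, t (w ++ e) <> None -> e = [::].
Proof.
move=> hw e; elim/last_ind: e => [|e c IH] // h.
rewrite -rcons_cat in h; have [a ha] := wf_parent h.
have /IH ee : t (w ++ e) <> None by rewrite ha.
by move: ha; rewrite ee cats0 hw.
Qed.

Lemma wf_varlt w j : t w = Some (inr j) -> j < n.
Proof. by case: wf => _ /(_ w) + hw; rewrite hw => -[]. Qed.

Lemma wf_child w a i : t w = Some (inl a) -> (t (rcons w i) <> None <-> i < ar a).
Proof. by case: wf => _ /(_ w) + hw; rewrite hw. Qed.

Lemma wf_pre w e : t (w ++ e) <> None -> t w <> None.
Proof.
elim/last_ind: e => [|e c IH]; first by rewrite cats0.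
rewrite -rcons_cat => /wf_parent [a ha]; apply: IH; by rewrite ha.
Qed.

Lemma wf_leaf_nil w j : t w = Some (inr j) -> w <> [::].
Proof. by move=> hw ew; have [a ha] := wf_root; move: hw; rewrite ew ha. Qed.
End WF.

Section Flat.
Variable S : alphabet.
Implicit Types (T : rtree2 S) (u p : seq nat) (L : seq (seq nat)).

Definition WT m T := wf_tree fst m T /\ forall w k s, T w = Some (inl (k, s)) -> wf_tree (@arity S) k s.

Definition vidx T u l : nat :=
  match T u with Some (inl (_, s)) => match s l with Some (inr i) => i | _ => 0 end | _ => 0 end.

Definition ov T u L := foldl (fun u l => rcons u (vidx T u l)) u L.

Fixpoint LV T u L : Prop :=
  match L with
  | [::] => exists ks, T u = Some (inl ks)
  | l :: L' => exists k s i, [/\ T u = Some (inl (k, s)), s l = Some (inr i) & LV T (rcons u i) L']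
  end.

Definition FV T u p : Prop := exists k s, T u = Some (inl (k, s)) /\
  ((exists a, s p = Some (inl a)) \/ exists i j, s p = Some (inr i) /\ T (rcons u i) = Some (inr j)).

Definition lab T u p : option (S + nat) :=
  match T u with
  | Some (inl (_, s)) =>
      match s p with
      | Some (inl a) => Some (inl a)
      | Some (inr i) => match T (rcons u i) with Some (inr j) => Some (inr j) | _ => None end
      | None => None
      end
  | _ => None
  end.

Definition stepf T (st : option fstate) c :=
  match st with Some (FNode u p) => resolve T u (rcons p c) | _ => None end.

Lemma flat_stateE T w : flat_state T w = foldl (stepf T) (resolve T [::] [::]) w.
Proof. by []. Qed.

Lemma LV_letter T u L : LV T u L -> exists ks, T u = Some (inl ks).
Proof. by case: L => [|l L] //= [k [s [i [-> _ _]]]]; exists (k, s). Qed.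

Arguments ov : simpl never.
Arguments lab : simpl never.

Lemma ov_cons T u l L k s i : T u = Some (inl (k, s)) -> s l = Some (inr i) -> ov T u (l :: L) = ov T (rcons u i) L.
Proof. by move=> hu hl; rewrite /ov /= /vidx hu hl. Qed.

Lemma ov_nil T u : ov T u [::] = u.
Proof. by []. Qed.

Lemma ov_cat T u L1 L2 : ov T u (L1 ++ L2) = ov T (ov T u L1) L2.
Proof. by rewrite /ov foldl_cat. Qed.

Lemma LV_end T u L : LV T u L -> exists ks, T (ov T u L) = Some (inl ks).
Proof.
elim: L u => [|l L IH] u /=; first by rewrite ov_nil.
move=> [k [s [i [hu hl hL]]]]; rewrite (ov_cons _ hu hl); exact: IH.
Qed.

Lemma LV_cat T L1 : forall u L2, LV T u (L1 ++ L2) <-> LV T u L1 /\ LV T (ov T u L1) L2.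
Proof.
elim: L1 => [|l L1 IH] u L2 /=.
- split; [move=> h; split => //; exact: LV_letter h | by case].
- split.
  + move=> [k [s [i [hu hl hL]]]]; have /IH [h1 h2] := hL.
    split; first by exists k, s, i. by rewrite (ov_cons _ hu hl).
  + move=> [[k [s [i [hu hl hL]]]] h2]; exists k, s, i; split => //.
    apply/IH; split => //; by rewrite -(ov_cons _ hu hl).
Qed.

Section WTsec.
Variables (m : nat) (T : rtree2 S).
Hypothesis wT : WT m T.

Lemma walk_local u k s p : T u = Some (inl (k, s)) -> s p <> None ->
  foldl (stepf T) (Some (FNode u [::])) p = resolve T u p.
Proof.
move=> hu; have ws := wT.2 _ _ _ hu.
elim/last_ind: p => [|p c IH] hp.
- have [a ha] := wf_root ws; by rewrite /= /resolve hu ha.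
- rewrite foldl_rcons; have [a ha] := wf_parent ws hp.
  rewrite IH; last by rewrite ha.
  by rewrite {1}/resolve hu ha.
Qed.

Lemma LV_nonnil u L : LV T u L -> forall l, l \in L -> l <> [::].
Proof.
elim: L u => [|l L IH] u //= [k [s [i [hu hl hL]]]] l'; rewrite inE => /orP[/eqP ->|hl'].
- have ws := wT.2 _ _ _ hu; exact: (wf_leaf_nil ws hl).
- exact: IH hL _ hl'.
Qed.

Lemma AV_state u L p : LV T u L -> FV T (ov T u L) p ->
  foldl (stepf T) (Some (FNode u [::])) (flatten L ++ p) = resolve T (ov T u L) p.
Proof.
elim: L u => [|l L IH] u /=.
- move=> _ [k [s [hu hp]]]; apply: walk_local hu _.
  by case: hp => [[a ->]|[i [j [-> _]]]].
- move=> [k [s [i [hu hl hL]]]]; rewrite (ov_cons _ hu hl) => hF.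
  rewrite -catA foldl_cat (walk_local hu) ?hl // /resolve hu hl.
  have [[k' s'] hc] := LV_letter hL; rewrite hc; exact: IH.
Qed.

Lemma root_state : resolve T [::] [::] = Some (FNode [::] [::]).
Proof.
have [[k s] h0] := wf_root wT.1.
have [a ha] := wf_root (wT.2 _ _ _ h0); by rewrite /resolve h0 ha.
Qed.

Lemma flat_lab L p : LV T [::] L -> FV T (ov T [::] L) p ->
  flat T (flatten L ++ p) = lab T (ov T [::] L) p /\ lab T (ov T [::] L) p <> None.
Proof.
move=> hL hF; rewrite /flat flat_stateE root_state (AV_state hL hF).
case: hF => k [s [hu [[a ha]|[i [j [hi hj]]]]]]; rewrite /resolve /lab hu ?ha ?hi ?hj /= ?hu ?ha ?hi ?hj; by split.
Qed.

Lemma flat_complete w0 : flat T w0 <> None ->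
  exists L p, [/\ LV T [::] L, FV T (ov T [::] L) p & w0 = flatten L ++ p].
Proof.
have key : forall w, (forall u p, flat_state T w = Some (FNode u p) ->
    exists L, [/\ LV T [::] L, ov T [::] L = u, w = flatten L ++ p &
       exists k s a, T u = Some (inl (k, s)) /\ s p = Some (inl a)]) /\
  (forall j, flat_state T w = Some (FVarS j) ->
    exists L p, [/\ LV T [::] L, FV T (ov T [::] L) p & w = flatten L ++ p]).
  elim/last_ind => [|w c [IH1 IH2]].
  - rewrite flat_stateE /= root_state; split => // u p [<- <-]; exists [::]; split => //.
    + have [a h0] := wf_root wT.1; by exists a.
    + have [[k s] h0] := wf_root wT.1.
      have [a ha] := wf_root (wT.2 _ _ _ h0); by exists k, s, a.
  - rewrite flat_stateE foldl_rcons -flat_stateE.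
    case E: (flat_state T w) => [[u p|j]|] /=; last 2 first.
    + by split.
    + by split.
    have [L [hL hov hw [k [s [a [hu hp]]]]]] := IH1 u p E.
    split.
    + move=> u' p'; rewrite /resolve hu; case hs: (s (rcons p c)) => [[a'|i]|] //.
      * move=> [<- <-]; exists L; split => //; first by rewrite hw rcons_cat.
        by exists k, s, a'.
      * case ht: (T (rcons u i)) => [[[k' s']|j]|] // [<- <-].
        exists (rcons L (rcons p c)); split.
        -- rewrite -cats1; apply/LV_cat; split => //; rewrite hov /=; exists k, s, i; split => //.
           by exists (k', s').
        -- by rewrite -cats1 ov_cat hov (ov_cons _ hu hs).
        -- by rewrite flatten_rcons cats0 hw rcons_cat.
        -- have [a'' ha''] := wf_root (wT.2 _ _ _ ht); by exists k', s', a''.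
    + move=> j'; rewrite /resolve hu; case hs: (s (rcons p c)) => [[a'|i]|] //.
      case ht: (T (rcons u i)) => [[[k' s']|j]|] // [ej].
      exists L, (rcons p c); split => //; last by rewrite hw rcons_cat.
      rewrite hov; exists k, s; split => //; right; by exists i, j.
move=> hw; have [K1 K2] := key w0; move: hw; rewrite /flat.
case E: (flat_state T w0) => [[u p|j]|] //.
- have [L [hL hov hw' [k [s [a [hu hp]]]]]] := K1 u p E => _.
  exists L, p; split => //; rewrite hov; exists k, s; split => //; left; by exists a.
- move=> _; exact: K2 E.
Qed.

Lemma catIl (a b c : seq nat) : a ++ b = a ++ c -> b = c.
Proof. by elim: a => //= x a IH [] /IH. Qed.

Lemma pre_split (a b c : seq nat) : prefix a (b ++ c) -> prefix a b \/ exists e, a = b ++ e.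
Proof.
case: (leqP (size a) (size b)) => hs.
- by rewrite !prefixE takel_cat // => h; left.
- rewrite prefixE => /eqP h; right; exists (drop (size b) a).
  have tb : take (size b) a = b by rewrite -h -take_min (minn_idPl (ltnW hs)) take_size_cat.
  by rewrite -{1}(cat_take_drop (size b) a) tb.
Qed.

Lemma leaf_final u l L p : LV T u (l :: L) -> FV T u p -> ~~ prefix l p.
Proof.
move=> [k [s [i [hu hl hL]]]] [k' [s' [hu' hp]]]; move: hu'; rewrite hu => -[ek es]; subst k' s'.
apply/negP => /prefixP [e he]; have ws := wT.2 _ _ _ hu.
have hpn : s p <> None by case: hp => [[a ->]|[i' [j [-> _]]]].
have ee := wf_leaf ws hl (e := e); rewrite -he in ee; move: (ee hpn) => e0.
rewrite e0 cats0 in he; subst p; rewrite hl in hp.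
case: hp => [[a //]|[i' [j [[<-] hj]]]]; have [ks hc] := LV_letter hL; by rewrite hc in hj.
Qed.

Lemma C_le L : forall L' u p p', LV T u L -> FV T (ov T u L) p -> LV T u L' -> FV T (ov T u L') p' ->
  prefix (flatten L ++ p) (flatten L' ++ p') = [&& size L <= size L', take (size L) L' == L & prefix p (nth p' L' (size L))].
Proof.
elim: L => [|l L IH] [|l' L'] u p p' /=.
- by rewrite ?take0 ?eqxx.
- move=> _ hF hL' hF'; rewrite ?take0 ?eqxx /= -catA; apply/idP/idP; last exact: prefix_catl.
  move/pre_split => [//|[e he]]; subst p.
  have := leaf_final hL' hF; by rewrite prefix_prefix.
- move=> hL hF _ hF'; rewrite -catA; apply/negP => /catl_prefix hp.
  have := leaf_final hL hF'; by rewrite hp.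
- move=> hL hF hL' hF'.
  have [k [s [i [hu hl hLL]]]] := hL; have [k' [s' [i' [hu' hl' hLL']]]] := hL'.
  move: hu'; rewrite hu => -[ek es]; subst k' s'.
  rewrite (ov_cons _ hu hl) in hF; rewrite (ov_cons _ hu hl') in hF'.
  rewrite -!catA; case: (eqVneq l l') => [el|ne].
  + subst l'; move: hl'; rewrite hl => -[ei]; subst i'.
    rewrite prefix_catr // eqxx /= ltnS eqseq_cons eqxx /=; exact: (IH _ _ _ _ hLL hF hLL' hF').
  + rewrite eqseq_cons eq_sym (negbTE ne) andbF /=.
    apply/negP => /catl_prefix /pre_split [hp|[e he]].
    * move/prefixP: hp => [e he]; have ws := wT.2 _ _ _ hu.
      have e0 : e = [::] by apply: (wf_leaf ws hl); rewrite -he hl'.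
      by move: ne; rewrite he e0 cats0 eqxx.
    * have ws := wT.2 _ _ _ hu.
      have e0 : e = [::] by apply: (wf_leaf ws hl'); rewrite -he hl.
      by move: ne; rewrite he e0 cats0 eqxx.
Qed.

Lemma C_root L p : LV T [::] L -> (flatten L ++ p = [::] <-> L = [::] /\ p = [::]).
Proof.
move=> hL; split; last by case=> -> ->.
case: L hL => [|l L] hL /=; first by move=> ->.
move=> h; have := LV_nonnil hL (l := l); rewrite inE eqxx => /(_ isT) hne; exfalso; apply: hne.
by move: h; clear hL; case: l.
Qed.

Lemma C_succ L L' p p' c : LV T [::] L -> FV T (ov T [::] L) p -> LV T [::] L' -> FV T (ov T [::] L') p' ->
  (flatten L' ++ p' = rcons (flatten L ++ p) c <->
   (L' = L /\ p' = rcons p c) \/ (L' = rcons L (rcons p c) /\ p' = [::])).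
Proof.
move=> hL hF hL' hF'; split; last first.
  case=> -[-> ->]; by rewrite ?flatten_rcons ?cats0 rcons_cat.
move=> H; have := prefix_rcons (flatten L ++ p) c; rewrite -H (C_le hL hF hL' hF').
move=> /and3P[hs /eqP ht hp].
case: (leqP (size L') (size L)) => hs'.
- have eL : L' = L by rewrite -ht take_oversize.
  subst L'; left; split => //; apply: (catIl (a := flatten L)); by rewrite H rcons_cat.
- have hd : drop (size L) L' <> [::] by move=> hd; have := size_drop (size L) L'; rewrite hd /= => /esym /eqP; rewrite subn_eq0 leqNgt hs'.
  case ed: (drop (size L) L') hd => [//|l R] _.
  have eL' : L' = L ++ l :: R by rewrite -ed -{1}ht cat_take_drop.
  subst L'; move: hp; rewrite nth_cat ltnn subnn /= => /prefixP [e el]; subst l.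
  move: H; rewrite flatten_cat /= -!catA rcons_cat => /catIl; rewrite -cats1 => /catIl.
  move=> eq.
  have hne : e <> [::].
    move=> e0; rewrite e0 cats0 in hL'.
    have [_ hLR] := (LV_cat T L [::] (p :: R)).1 hL'.
    have := leaf_final hLR hF; by rewrite prefix_refl.
  have := congr1 size eq; rewrite !size_cat /=.
  clear hs ht ed hs'; case: e hne eq hL' hF' => [//|c' [|c'' e]] _ eq hL' hF'; last by rewrite /= !addSn.
  move=> /eqP; rewrite /= eqSS addn_eq0 => /andP[/eqP/size0nil fR /eqP/size0nil ep'].
  have hR : R = [::].
    case: R hL' fR {eq hF'} => // r R hL' /= fr; have := LV_nonnil hL' (l := r).
    rewrite mem_cat !inE eqxx !orbT => /(_ isT) hn'; exfalso; apply: hn'; by move: fr; clear hL'; case: r.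
  subst R p'; move: eq => /= [->]; right; by rewrite cats1.
Qed.

End WTsec.
End Flat.
Section Comp.
Variables (S : alphabet) (V B Q m : nat).
Notation E := (E V B).
Notation atom_ok := (atom_ok V B).

Definition c0 : nat -> seq nat := fun _ => [::].
Definition pred0n : nat -> bool := fun _ => false.

Definition Rel (T1 T2 : rtree2 S) := forall u,
  match T1 u, T2 u with
  | None, None => True
  | Some (inr i), Some (inr j) => i = j
  | Some (inl (k, s)), Some (inl (k', s')) => k = k' /\ E k Q pred0n s c0 s' c0
  | _, _ => False
  end.

Lemma Rel_sym T1 T2 : Rel T1 T2 -> Rel T2 T1.
Proof.
move=> h u; move: (h u); case: (T1 u) => [[[k s]|i]|]; case: (T2 u) => [[[k' s']|j]|] //.
- by case=> -> he; split => //; apply: E_sym.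
Qed.

Lemma Rel_letter T1 T2 u k s1 : Rel T1 T2 -> T1 u = Some (inl (k, s1)) ->
  exists s2, T2 u = Some (inl (k, s2)) /\ E k Q pred0n s1 c0 s2 c0.
Proof.
move=> h e; move: (h u); rewrite e; case: (T2 u) => [[[k' s']|j]|] // [<- he]; by exists s'.
Qed.

Lemma Rel_var T1 T2 u j : Rel T1 T2 -> T1 u = Some (inr j) -> T2 u = Some (inr j).
Proof. by move=> h e; move: (h u); rewrite e; case: (T2 u) => [[[k' s']|j']|] // ->. Qed.

Definition addr := (seq (seq nat) * seq nat)%type.
Definition flatX (X : addr) := flatten X.1 ++ X.2.
Definition AV (T : rtree2 S) (X : addr) := LV T [::] X.1 /\ FV T (ov T [::] X.1) X.2.
Definition loc (X : nat -> addr) j := fun y => nth (X y).2 (X y).1 j.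
Definition cb (b : nat -> bool) (X : nat -> addr) x j :=
  fun y => [&& b y, j <= size (X y).1 & take j (X y).1 == take j (X x).1].

Definition Inv (T1 T2 : rtree2 S) r (b : nat -> bool) (X1 X2 : nat -> addr) : Prop :=
 [/\ (forall x, b x -> [/\ AV T1 (X1 x), AV T2 (X2 x) & size (X1 x).1 = size (X2 x).1]),
     (forall x y, b x -> b y -> forall j, j <= size (X1 x).1 -> j <= size (X1 y).1 ->
         (take j (X1 x).1 = take j (X1 y).1 <-> take j (X2 x).1 = take j (X2 y).1)) &
     (forall x, b x -> forall j, j <= size (X1 x).1 ->
         ov T1 [::] (take j (X1 x).1) = ov T2 [::] (take j (X2 x).1) /\
         forall k s1 s2, T1 (ov T1 [::] (take j (X1 x).1)) = Some (inl (k, s1)) ->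
            T2 (ov T2 [::] (take j (X2 x).1)) = Some (inl (k, s2)) ->
            E k r (cb b X1 x j) s1 (loc X1 j) s2 (loc X2 j))].

Lemma Inv_sym T1 T2 r b X1 X2 : Inv T1 T2 r b X1 X2 -> Inv T2 T1 r b X2 X1.
Proof.
case=> h1 h2 h3; split.
- by move=> x bx; have [? ? ?] := h1 x bx.
- move=> x y bx ny j; have [_ _ <-] := h1 x bx; have [_ _ <-] := h1 y ny => jx jy.
  by rewrite (h2 x y).
- move=> x bx j; have [_ _ e] := h1 x bx; rewrite -e => jx.
  have [eo hE] := h3 x bx j jx; split => // k s2 s1 e2 e1.
  apply: E_sym; apply: E_restr (hE k s1 s2 e1 e2) _.
  move=> z /and3P[bz jz /eqP tz]; have [_ _ ez] := h1 z bz.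
  rewrite /cb bz ez jz /=; apply/eqP; apply/(h2 z x bz bx) => //; by rewrite ez.
Qed.

Lemma Inv_restr T1 T2 r b (b' : nat -> bool) X1 X2 : Inv T1 T2 r b X1 X2 -> (forall z, b' z -> b z) -> Inv T1 T2 r b' X1 X2.
Proof.
case=> h1 h2 h3 hb; split.
- move=> x /hb; exact: h1.
- move=> x y /hb bx /hb ny; exact: h2.
- move=> x /hb bx j jx; have [eo hE] := h3 x bx j jx; split => // k s1 s2 e1 e2.
  apply: E_restr (hE k s1 s2 e1 e2) _ => z /and3P[bz jz tz]; by rewrite /cb (hb _ bz) jz tz.
Qed.

Lemma lab_inl (T : rtree2 S) u k s p c : T u = Some (inl (k, s)) -> (lab T u p = Some (inl c) <-> s p = Some (inl c)).
Proof.
move=> hu; rewrite /lab hu; case: (s p) => [[a|i]|] //; last by case: (T (rcons u i)) => [[?|?]|].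
Qed.

Lemma lab_inr (T : rtree2 S) u k s p j : T u = Some (inl (k, s)) ->
  (lab T u p = Some (inr j) <-> exists i, s p = Some (inr i) /\ T (rcons u i) = Some (inr j)).
Proof.
move=> hu; rewrite /lab hu; case hp: (s p) => [[a|i]|]; try by split => // -[i' []].
split.
- case ht: (T (rcons u i)) => [[x|j']|] // [<-]; by exists i.
- by move=> [i' [[<-] ->]].
Qed.

Section Atoms.
Variables (T1 T2 : rtree2 S) (r : nat) (b : nat -> bool) (X1 X2 : nat -> addr).
Hypotheses (w1 : WT m T1) (w2 : WT m T2) (hR : Rel T1 T2) (hI : Inv T1 T2 r b X1 X2).

Lemma take_LV (T : rtree2 S) L j : LV T [::] L -> LV T [::] (take j L).
Proof. by rewrite -{1}(cat_take_drop j L) => /LV_cat []. Qed.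

Lemma loc_E x j : b x -> j <= size (X1 x).1 ->
  exists k s1 s2, [/\ T1 (ov T1 [::] (take j (X1 x).1)) = Some (inl (k, s1)),
     T2 (ov T2 [::] (take j (X2 x).1)) = Some (inl (k, s2)) &
     forall a, atom_ok k a -> all (cb b X1 x j) (fo_fv a) -> (sat s1 (loc X1 j) a <-> sat s2 (loc X2 j) a)].
Proof.
move=> bx jx; case: hI => h1 _ h3; have [[hL1 _] _ _] := h1 x bx.
have [[k s1] e1] := LV_end (take_LV j hL1).
have [eo hE] := h3 x bx j jx.
have [s2 [e2 _]] := Rel_letter hR e1; rewrite eo in e2.
exists k, s1, s2; split => //; apply: E_at; exact: hE k s1 s2 e1 e2.
Qed.

Lemma cb_self x j : b x -> j <= size (X1 x).1 -> cb b X1 x j x.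
Proof. by move=> bx jx; rewrite /cb bx jx eqxx. Qed.

Lemma le_transfer x y : x < V -> y < V -> b x -> b y ->
  prefix (flatX (X1 x)) (flatX (X1 y)) -> prefix (flatX (X2 x)) (flatX (X2 y)).
Proof.
move=> xV yV bx ny; case: hI => h1 h2 _.
have [[hLx hFx] [hLx' hFx'] sx] := h1 x bx; have [[hLy hFy] [hLy' hFy'] sy] := h1 y ny.
rewrite /flatX (C_le w1 hLx hFx hLy hFy) (C_le w2 hLx' hFx' hLy' hFy').
move=> /and3P[hs /eqP ht hp]; rewrite -sx -sy hs /=.
have tx : take (size (X1 x).1) (X1 x).1 = (X1 x).1 by rewrite take_size.
have [k [s1 [s2 [_ _ hA]]]] := loc_E bx (leqnn _).
have hy : cb b X1 x (size (X1 x).1) y by rewrite /cb ny hs ht tx eqxx.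
have := hA (FLe S x y); rewrite /= xV yV /= cb_self //= hy => /(_ isT isT) [+ _].
rewrite /loc (nth_default _ (leqnn (size (X1 x).1))) sx (nth_default _ (leqnn (size (X2 x).1))).
rewrite -sx => /(_ hp) ->; rewrite andbT.
apply/eqP; have [hh _] := h2 x y bx ny _ (leqnn _) hs; move: hh; rewrite tx ht => /(_ erefl).
by rewrite sx take_size.
Qed.

Lemma prefix_anti (a c : seq nat) : prefix a c -> prefix c a -> a = c.
Proof.
move=> /prefixP [e1 ->] /prefixP [e2]; rewrite -catA -{1}(cats0 a) => /catIl.
case: e1 => [_|//]; by rewrite cats0.
Qed.

Lemma atoms a : atom_ok m a -> all b (fo_fv a) ->
  sat (flat T1) (fun z => flatX (X1 z)) a -> sat (flat T2) (fun z => flatX (X2 z)) a.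
Proof.
case: hI => h1 h2 h3.
case: a => //=.
- move=> x y /andP[xV yV]; rewrite andbT => /andP[bx ny]; exact: le_transfer.
- move=> i x y /and3P[iB xV yV]; rewrite andbT => /andP[bx ny].
  have [[hLx hFx] [hLx' hFx'] sx] := h1 x bx; have [[hLy hFy] [hLy' hFy'] sy] := h1 y ny.
  rewrite /flatX (C_succ w1 _ hLx hFx hLy hFy) (C_succ w2 _ hLx' hFx' hLy' hFy').
  set j := size (X1 x).1.
  have [k [s1 [s2 [_ _ hA]]]] := loc_E bx (leqnn j).
  have tx : take j (X1 x).1 = (X1 x).1 by rewrite take_size.
  have tx' : take j (X2 x).1 = (X2 x).1 by rewrite /j sx take_size.
  have hj1 : size (X1 x).1 <= j by [].
  have hj2 : size (X2 x).1 <= j by rewrite /j sx.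
  case=> -[ey py].
  + have jy : j <= size (X1 y).1 by rewrite ey.
    have hy : cb b X1 x j y by rewrite /cb ny jy ey eqxx.
    have ey' : (X2 y).1 = (X2 x).1.
      have [hh _] := h2 x y bx ny j (leqnn _) jy.
      have e' : take j (X2 x).1 = take j (X2 y).1 by apply: hh; rewrite ey.
      move: e'; rewrite tx' => ->; by rewrite take_oversize // -sy ey.
    have := hA (FSucc S i x y); rewrite /= iB xV yV /= cb_self //= hy => /(_ isT isT) [+ _].
    rewrite /loc ey ey' !(nth_default _ hj1) !(nth_default _ hj2) => /(_ py) py'.
    by left.
  + have jy : j < size (X1 y).1 by rewrite ey size_rcons.
    have hy : cb b X1 x j y by rewrite /cb ny (ltnW jy) ey -cats1 take_size_cat // tx eqxx.
    have := hA (FSucc S i x y); rewrite /= iB xV yV /= cb_self //= hy => /(_ isT isT) [+ _].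
    rewrite /loc (nth_default _ hj1) (nth_default _ hj2) ey nth_rcons ltnn eqxx => /(_ erefl) py'.
    have e2 : take j (X2 y).1 = (X2 x).1.
      have [hh _] := h2 x y bx ny j (leqnn _) (ltnW jy).
      have e' : take j (X2 x).1 = take j (X2 y).1 by apply: hh; rewrite tx ey -cats1 take_size_cat.
      by move: e'; rewrite tx' => ->.
    have jy' : j < size (X2 y).1 by rewrite -sy.
    have [k' [s1' [s2' [_ _ hB]]]] := loc_E ny jy.
    have := hB (FRoot S y); rewrite /= yV /= cb_self //= => /(_ isT isT) [+ _].
    rewrite /loc !nth_default ?ey ?size_rcons // -?sy ?ey ?size_rcons // => /(_ py) py2.
    right; split => //.
    rewrite -(cat_take_drop j (X2 y).1) e2 (drop_nth [::]) //.
    have : drop j.+1 (X2 y).1 = [::] by apply: size0nil; rewrite size_drop -sy ey size_rcons subnn.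
    move=> ->; rewrite cats1; congr rcons.
    move: py'; rewrite (set_nth_default [::]) //.
- move=> c x xV; rewrite andbT => bx.
  have [[hLx hFx] [hLx' hFx'] sx] := h1 x bx.
  have [fl1 _] := flat_lab w1 hLx hFx; have [fl2 _] := flat_lab w2 hLx' hFx'.
  rewrite /flatX fl1 fl2.
  have [k [s1 [s2 [e1 e2 hA]]]] := loc_E bx (leqnn _); rewrite take_size in e1; rewrite sx take_size in e2.
  rewrite (lab_inl _ _ e1) (lab_inl _ _ e2).
  have := hA (FLab c x); rewrite /= xV /= cb_self //= => /(_ isT isT) [+ _].
  by rewrite /loc !nth_default // -sx.
- move=> i x /andP[im xV]; rewrite andbT => bx.
  have [[hLx hFx] [hLx' hFx'] sx] := h1 x bx.
  have [fl1 _] := flat_lab w1 hLx hFx; have [fl2 _] := flat_lab w2 hLx' hFx'.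
  rewrite /flatX fl1 fl2.
  have [k [s1 [s2 [e1 e2 hA]]]] := loc_E bx (leqnn _); rewrite take_size in e1; rewrite sx take_size in e2.
  rewrite (lab_inr _ _ e1) (lab_inr _ _ e2) => -[i' [hi' ht]].
  exists i'; split; last first.
    have [eo _] := h3 x bx _ (leqnn _); rewrite take_size sx take_size in eo.
    by rewrite -eo; apply: Rel_var hR ht.
  have i'k : i' < k := wf_varlt (w1.2 _ _ _ e1) hi'.
  have := hA (FQ S i' x); rewrite /= i'k xV /= cb_self //= => /(_ isT isT) [+ _].
  rewrite /loc (nth_default _ (leqnn (size (X1 x).1))) sx (nth_default _ (leqnn (size (X2 x).1))).
  by move=> /(_ hi').
- move=> x xV; rewrite andbT => bx.
  have [[hLx hFx] [hLx' hFx'] sx] := h1 x bx.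
  rewrite /flatX (C_root w1 _ hLx) (C_root w2 _ hLx') => -[ex ep].
  have hs : size (X2 x).1 = 0 by rewrite -sx ex.
  split; first exact: size0nil.
  have [k [s1 [s2 [_ _ hA]]]] := loc_E bx (leq0n (size (X1 x).1)).
  have := hA (FRoot S x); rewrite /= xV /= cb_self //= => /(_ isT isT) [+ _].
  by rewrite /loc !nth_default ?ex ?hs //= => /(_ ep).
- move=> x y /andP[xV yV]; rewrite andbT => /andP[bx ny] e.
  apply: prefix_anti; apply: le_transfer => //; by rewrite e prefix_refl.
Qed.

End Atoms.
Section Forth.
Variables (T1 T2 : rtree2 S) (r : nat) (b0 : nat -> bool) (X1 X2 : nat -> addr) (x : nat) (L : seq (seq nat)) (p : seq nat).
Hypotheses (w1 : WT m T1) (w2 : WT m T2) (hR : Rel T1 T2) (hI : Inv T1 T2 r.+1 b0 X1 X2) (rQ : r < Q)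
  (xV : x < V) (bx0 : b0 x = false) (hbV : forall y, b0 y -> y < V) (hL : LV T1 [::] L) (hF : FV T1 (ov T1 [::] L) p).

Definition cbn i := fun y => [&& b0 y, i <= size (X1 y).1 & take i (X1 y).1 == take i L].

Lemma local_start j P' : ov T1 [::] (take j L) = ov T2 [::] P' ->
  (forall y, b0 y -> j <= size (X1 y).1 -> (take j (X1 y).1 = take j L <-> take j (X2 y).1 = P')) ->
  forall k s1 s2, T1 (ov T1 [::] (take j L)) = Some (inl (k, s1)) -> T2 (ov T2 [::] P') = Some (inl (k, s2)) ->
  E k r.+1 (cbn j) s1 (loc X1 j) s2 (loc X2 j).
Proof.
move=> eo hc k s1 s2 e1 e2; case: hI => h1 h2 h3.
case: (classic (exists y, [/\ b0 y, j <= size (X1 y).1 & take j (X1 y).1 = take j L])).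
- move=> [y [hby jy ty]]; have [eo' hE] := h3 y hby j jy.
  have e1' : T1 (ov T1 [::] (take j (X1 y).1)) = Some (inl (k, s1)) by rewrite ty.
  have e2' : T2 (ov T2 [::] (take j (X2 y).1)) = Some (inl (k, s2)) by rewrite (proj1 (hc y hby jy) ty).
  apply: E_restr (hE k s1 s2 e1' e2') _ => z /and3P[bz jz /eqP tz]; by rewrite /cb bz jz tz ty eqxx.
- move=> hn; have [s2' [e2' hE]] := Rel_letter hR e1; move: e2'; rewrite eo e2 => -[es]; subst s2'.
  have hE' := E_monoN rQ hE.
  have hE'' : E k r.+1 pred0n s1 (loc X1 j) s2 (loc X2 j) by apply: E_ext hE' _ _.
  apply: E_restr hE'' _ => z /and3P[bz jz /eqP tz]; exfalso; apply: hn; by exists z.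
Qed.


Lemma upd_x (mu : nat -> seq nat) v : upd mu x v x = v.
Proof. by rewrite /upd eqxx. Qed.

Lemma upd_y (mu : nat -> seq nat) v y : y != x -> upd mu x v y = mu y.
Proof. by rewrite /upd => /negbTE ->. Qed.

Lemma walk d : forall j P', j + d = size L -> size P' = j -> LV T2 [::] P' ->
  ov T1 [::] (take j L) = ov T2 [::] P' ->
  (forall y, b0 y -> j <= size (X1 y).1 -> (take j (X1 y).1 = take j L <-> take j (X2 y).1 = P')) ->
  exists R' p', [/\ LV T2 [::] (P' ++ R'), FV T2 (ov T2 [::] (P' ++ R')) p', size R' = d &
    forall i, j <= i -> i <= size L -> [/\ ov T1 [::] (take i L) = ov T2 [::] (take i (P' ++ R')),
      (forall y, b0 y -> i <= size (X1 y).1 -> (take i (X1 y).1 = take i L <-> take i (X2 y).1 = take i (P' ++ R'))) &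
      forall k s1 s2, T1 (ov T1 [::] (take i L)) = Some (inl (k, s1)) -> T2 (ov T2 [::] (take i (P' ++ R'))) = Some (inl (k, s2)) ->
        E k r (addv (cbn i) x) s1 (upd (loc X1 i) x (nth p L i)) s2 (upd (loc X2 i) x (nth p' (P' ++ R') i))]].
Proof.
elim: d => [|d IH] j P' hjd hsP hLP eo hc.
- rewrite addn0 in hjd; rewrite hjd in hsP eo hc *; clear hjd j.
  have tL : take (size L) L = L := take_size L.
  rewrite tL in eo hc.
  have [k [s1 [e1 hp]]] := hF.
  have [s2 [e2 _]] := Rel_letter hR e1; rewrite eo in e2.
  have hE : E k r.+1 (cbn (size L)) s1 (loc X1 (size L)) s2 (loc X2 (size L)).
    by apply: (local_start (P' := P')); rewrite ?tL.
  have [_ hF'] := hE; have [fw _] := hF' x xV.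
  have sp : s1 p <> None by case: hp => [[a ->]|[i [j' [-> _]]]].
  have [p' sp' hE'] := fw p sp.
  have hat := E_at hE'.
  exists [::], p'; rewrite cats0; split => //.
  + exists k, s2; split => //; case: hp => [[a ha]|[i [j' [hi hj]]]].
    * left; exists a; have := hat (FLab a x); rewrite /= xV /addv eqxx => /(_ isT isT) [+ _].
      by rewrite !upd_x => /(_ ha).
    * right; exists i, j'; split.
      -- have ik : i < k := wf_varlt (w1.2 _ _ _ e1) hi.
         have := hat (FQ S i x); rewrite /= xV ik /addv eqxx => /(_ isT isT) [+ _].
         by rewrite !upd_x => /(_ hi).
      -- by rewrite -eo; apply: Rel_var hR hj.
  + move=> i hi1 hi2; have ei : i = size L by apply/eqP; rewrite eqn_leq hi1 hi2.
    subst i; rewrite tL take_oversize ?hsP //; split => // k' s1' s2' e1' e2'.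
    move: e1'; rewrite e1 => -[ek es]; subst k' s1'; move: e2'; rewrite e2 => -[es]; subst s2'.
    by rewrite (nth_default p (leqnn _)) nth_default ?hsP.
- have jL : j < size L by rewrite -hjd addnS ltnS leq_addr.
  set l := nth [::] L j.
  have eL : L = take j L ++ l :: drop j.+1 L by rewrite -(drop_nth [::] jL) cat_take_drop.
  have := hL; rewrite {1}eL => /LV_cat [_ /= [k [s1 [i [e1 hl hLr]]]]].
  have [s2 [e2 _]] := Rel_letter hR e1; rewrite eo in e2.
  have hE : E k r.+1 (cbn j) s1 (loc X1 j) s2 (loc X2 j) by apply: (local_start (P' := P')).
  have [_ hF'] := hE; have [fw _] := hF' x xV.
  have sl : s1 l <> None by rewrite hl.
  have [l' sl' hE'] := fw l sl.
  have hat := E_at hE'.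
  have ik : i < k := wf_varlt (w1.2 _ _ _ e1) hl.
  have hl' : s2 l' = Some (inr i).
    have := hat (FQ S i x); rewrite /= xV ik /addv eqxx => /(_ isT isT) [+ _].
    by rewrite !upd_x => /(_ hl).
  have [[k1 s1c] ec1] := LV_letter hLr.
  have [s2c [ec2 _]] := Rel_letter hR ec1; rewrite eo in ec2.
  have tj : take j.+1 L = rcons (take j L) l by rewrite (take_nth [::] jL).
  have hov1 : ov T1 [::] (rcons (take j L) l) = rcons (ov T1 [::] (take j L)) i.
    by rewrite -cats1 ov_cat (ov_cons _ e1 hl) ov_nil.
  have hov2 : ov T2 [::] (rcons P' l') = rcons (ov T2 [::] P') i.
    by rewrite -cats1 ov_cat (ov_cons _ e2 hl') ov_nil.
  have hEq : forall y, b0 y -> j < size (X1 y).1 -> take j (X1 y).1 = take j L ->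
      (nth [::] (X1 y).1 j = l <-> nth [::] (X2 y).1 j = l').
    move=> y hby jy ty; case: hI => h1 _ _; have [_ _ sy] := h1 y hby.
    have yx : y != x by apply/eqP => e; subst y; rewrite bx0 in hby.
    have hyc : cbn j y by rewrite /cbn hby (ltnW jy) ty eqxx.
    have := hat (FEq S y x); rewrite /= xV /addv eqxx hyc orbT /=.
    rewrite (hbV hby) => /(_ isT isT); rewrite !upd_x !upd_y // /loc.
    rewrite (set_nth_default [::] _ jy) (set_nth_default [::] _ (leq_trans jy (eq_leq sy))).
    done.
  have [R'' [p' [hLV hFV hsz hout]]] : exists R' p', [/\ LV T2 [::] (rcons P' l' ++ R'), FV T2 (ov T2 [::] (rcons P' l' ++ R')) p', size R' = d &
    forall i, j.+1 <= i -> i <= size L -> [/\ ov T1 [::] (take i L) = ov T2 [::] (take i (rcons P' l' ++ R')),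
      (forall y, b0 y -> i <= size (X1 y).1 -> (take i (X1 y).1 = take i L <-> take i (X2 y).1 = take i (rcons P' l' ++ R'))) &
      forall k s1 s2, T1 (ov T1 [::] (take i L)) = Some (inl (k, s1)) -> T2 (ov T2 [::] (take i (rcons P' l' ++ R'))) = Some (inl (k, s2)) ->
        E k r (addv (cbn i) x) s1 (upd (loc X1 i) x (nth p L i)) s2 (upd (loc X2 i) x (nth p' (rcons P' l' ++ R') i))]].
    apply: IH.
    + by rewrite addSnnS.
    + by rewrite size_rcons hsP.
    + rewrite -cats1; apply/LV_cat; split => //; exists k, s2, i; split => //; by exists (k1, s2c).
    + by rewrite tj hov1 hov2 eo.
    + move=> y hby jy; case: hI => h1 _ _; have [_ _ sy] := h1 y hby.
      rewrite tj (take_nth [::] jy) (take_nth [::] (leq_trans jy (eq_leq sy))).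
      split.
      * move=> /rcons_inj [ty ny]; have [t2 _] := hc y hby (ltnW jy); rewrite (t2 ty).
        by rewrite -(proj1 (hEq y hby jy ty) ny).
      * move=> /rcons_inj [ty ny]; have [_ t1] := hc y hby (ltnW jy); have ty1 := t1 ty.
        by rewrite ty1 (proj2 (hEq y hby jy ty1) ny).
  exists (l' :: R''), p'; rewrite -cat_rcons; split => //; first by rewrite /= hsz.
  move=> i0 ji iL; case: (eqVneq i0 j) => [ei|ne]; last first.
    by apply: hout => //; rewrite ltn_neqAle eq_sym ne ji.
  subst i0; rewrite -cats1 -catA !(take_size_cat _ hsP).
  split => // k' s1' s2' e1' e2'.
  move: e1'; rewrite e1 => -[ek es]; subst k' s1'; move: e2'; rewrite e2 => -[es]; subst s2'.
  rewrite (set_nth_default [::] _ jL) -/l nth_cat hsP ltnn subnn /=; exact: hE'.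
Qed.

End Forth.
Lemma forth T1 T2 r (b : nat -> bool) X1 X2 x w : WT m T1 -> WT m T2 -> Rel T1 T2 -> r < Q -> (forall z, b z -> z < V) ->
  Inv T1 T2 r.+1 b X1 X2 -> x < V -> flat T1 w <> None ->
  exists X X', [/\ flatX X = w, flat T2 (flatX X') <> None &
    Inv T1 T2 r (addv b x) (fun z => if z == x then X else X1 z) (fun z => if z == x then X' else X2 z)].
Proof.
move=> w1 w2 hR rQ hbV hI xV hw.
pose b0 := fun z => b z && (z != x).
have hI0 : Inv T1 T2 r.+1 b0 X1 X2 by apply: Inv_restr hI _ => z /andP[].
have bx0 : b0 x = false by rewrite /b0 eqxx andbF.
have hbV0 : forall y, b0 y -> y < V by move=> y /andP[/hbV].
have [L [p [hL hF ew]]] := flat_complete w1 hw.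
have hroot2 : LV T2 [::] [::] by have [a h] := wf_root w2.1; exists a.
have eo0 : ov T1 [::] (take 0 L) = ov T2 [::] [::] by rewrite take0.
have hc0 : forall y, b0 y -> 0 <= size (X1 y).1 -> (take 0 (X1 y).1 = take 0 L <-> take 0 (X2 y).1 = [::]).
  by move=> y _ _; rewrite !take0.
have [R' [p' [hLV hFV hsz hout]]] := @walk _ _ _ _ _ _ _ _ _ w1 hR hI0 rQ xV bx0 hbV0 hL hF (size L) 0 [::] erefl erefl hroot2 eo0 hc0.
rewrite /= in hLV hFV hout.
pose X1n := fun z => if z == x then (L, p) else X1 z.
pose X2n := fun z => if z == x then (R', p') else X2 z.
have el1 : forall j z, upd (loc X1 j) x (nth p L j) z = loc X1n j z.
  by move=> j z; rewrite /upd /loc /X1n; case: eqP.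
have el2 : forall j z, upd (loc X2 j) x (nth p' R' j) z = loc X2n j z.
  by move=> j z; rewrite /upd /loc /X2n; case: eqP.
exists (L, p), (R', p'); split.
- by rewrite /flatX ew.
- by have [-> ?] := flat_lab w2 hLV hFV.
case: hI0 => h1 h2 h3; split.
- move=> z; rewrite /addv; case: (eqVneq z x) => [->|zx] /= hz.
  + by split; [split|split|rewrite hsz].
  + apply: h1; by rewrite /b0 hz zx.
- move=> z1 z2; rewrite /addv; case: (eqVneq z1 x) => [->|n1]; case: (eqVneq z2 x) => [->|n2] //= h1' h2' j j1 j2.
  + have [_ hc _] := hout j (leq0n _) j1; have hb2 : b0 z2 by rewrite /b0 h2' n2.
    have := hc z2 hb2 j2.
    by case=> f g; split => e; symmetry; [apply: f | apply: g]; symmetry.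
  + have [_ hc _] := hout j (leq0n _) j2; have hb1 : b0 z1 by rewrite /b0 h1' n1.
    exact: hc z1 hb1 j1.
  + apply: h2 => //; by rewrite /b0 ?h1' ?h2' ?n1 ?n2.
- move=> z; rewrite /addv; case: (eqVneq z x) => [->|nz] /= hz j jz.
  + have [ho hc hE] := hout j (leq0n _) jz; split => // k s1 s2 e1 e2.
    apply: E_restr (E_ext (hE k s1 s2 e1 e2) (fun z _ => el1 j z) (fun z _ => el2 j z)) _.
    move=> z' /and3P[]; rewrite /addv /cbn /X1n eqxx; case: (eqVneq z' x) => [//|nz'] /= bz' jz' tz'.
    by rewrite /b0 bz' nz' jz' tz'.
  + have hb0 : b0 z by rewrite /b0 hz nz.
    have [eo hE] := h3 z hb0 j jz; split => //.
    case: (boolP [&& j <= size L & take j (X1 z).1 == take j L]) => [/andP[jL /eqP tz]|hn].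
    * have [ho hc hE'] := hout j (leq0n _) jL; move=> k s1 s2 e1 e2.
      rewrite tz in e1; rewrite (proj1 (hc z hb0 jz) tz) in e2.
      apply: E_restr (E_ext (hE' k s1 s2 e1 e2) (fun z _ => el1 j z) (fun z _ => el2 j z)) _.
      move=> z' /and3P[]; rewrite /addv /cbn /X1n (negbTE nz); case: (eqVneq z' x) => [//|nz'] /= bz' jz' tz'.
      by rewrite /b0 bz' nz' jz' -tz tz'.
    * move=> k s1 s2 e1 e2; have hE1 := E_mono (hE k s1 s2 e1 e2).
      have sub : forall z', cb (addv b x) X1n z j z' -> cb b0 X1 z j z' /\ z' != x.
        move=> z' /and3P[]; rewrite /addv /X1n (negbTE nz); case: (eqVneq z' x) => [->|nz'] /=.
        - move=> _ jL /eqP tL; by move: hn; rewrite jL tL eqxx.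
        - by move=> bz' jz' tz'; rewrite /cb /b0 bz' nz' jz' tz'.
      apply: E_ext (E_restr hE1 (fun z' h => (sub z' h).1)) _ _ => z' /sub [_ nz'].
      * by rewrite /loc /X1n (negbTE nz').
      * by rewrite /loc /X2n (negbTE nz').
Qed.

Lemma main r : r <= Q -> forall T1 T2 (b : nat -> bool) X1 X2, WT m T1 -> WT m T2 -> Rel T1 T2 -> (forall z, b z -> z < V) ->
  Inv T1 T2 r b X1 X2 -> E m r b (flat T1) (fun z => flatX (X1 z)) (flat T2) (fun z => flatX (X2 z)).
Proof.
elim: r => [|r IH] rQ T1 T2 b X1 X2 w1 w2 hR hbV hI; split.
- move=> a ha hb; split; [exact: (atoms w1 w2 hR hI ha hb) | exact: (atoms w2 w1 (Rel_sym hR) (Inv_sym hI) ha hb)].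
- by [].
- move=> a ha hb; split; [exact: (atoms w1 w2 hR hI ha hb) | exact: (atoms w2 w1 (Rel_sym hR) (Inv_sym hI) ha hb)].
- have hbV' : forall x, x < V -> forall z, addv b x z -> z < V.
    by move=> x xV z; rewrite /addv; case: eqP => [->|_] //= /hbV.
  move=> x xV; split.
  + move=> w hw; have [X [X' [ew hw' hI']]] := forth w1 w2 hR rQ hbV hI xV hw.
    exists (flatX X') => //.
    apply: E_ext (IH (ltnW rQ) _ _ _ _ _ w1 w2 hR (hbV' x xV) hI') _ _ => z _; rewrite /upd; by case: eqP.
  + move=> w' hw'; have [X' [X [ew hw hI']]] := forth w2 w1 (Rel_sym hR) rQ hbV (Inv_sym hI) xV hw'.
    exists (flatX X) => //.
    apply: E_ext (IH (ltnW rQ) _ _ _ _ _ w1 w2 hR (hbV' x xV) (Inv_sym hI')) _ _ => z _; rewrite /upd; by case: eqP.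
Qed.

End Comp.
Section Final.
Variable S : alphabet.

Fixpoint vmax (f : fo S) : nat :=
  match f with
  | FLe x y | FEq x y | FSucc _ x y => maxn x.+1 y.+1
  | FLab _ x | FQ _ x | FRoot x => x.+1
  | FNot g => vmax g
  | FAnd g h => maxn (vmax g) (vmax h)
  | FEx x g => maxn x.+1 (vmax g)
  end.

Fixpoint smax (f : fo S) : nat :=
  match f with
  | FSucc i _ _ => i.+1
  | FNot g | FEx _ g => smax g
  | FAnd g h => maxn (smax g) (smax h)
  | _ => 0
  end.

Lemma good_max V B f : vmax f <= V -> smax f <= B -> good V B f.
Proof.
elim: f => //=.
- by move=> x y; rewrite geq_max => /andP[-> ->].
- by move=> i x y; rewrite geq_max => /andP[-> ->] ->.
- by move=> x y; rewrite geq_max => /andP[-> ->].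
- by move=> g IHg h IHh; rewrite !geq_max => /andP[hg hh] /andP[sg sh]; rewrite IHg ?IHh.
- by move=> x g IH; rewrite geq_max => /andP[-> hg] sg; rewrite IH.
Qed.

Lemma In_foldr (g : nat * fo S -> nat) l nf : List.In nf l -> g nf <= foldr (fun nf acc => maxn (g nf) acc) 0 l.
Proof.
elim: l => [|a l IH] //= [->|h]; first by rewrite leq_maxl.
by apply: leq_trans (IH h) (leq_maxr _ _).
Qed.

End Final.

Lemma all_pred0 (l : seq nat) : all pred0n l -> l = [::].
Proof. by case: l. Qed.

Lemma compositional lin : FO_compositional lin.
Proof.
move=> Phi hfin hFO.
pose lS := fun S => proj1_sig (constructive_indefinite_description _ (hfin S)).
have hlS : forall S n f, Phi S n f -> List.In (n, f) (lS S).
  by move=> S; rewrite /lS; case: constructive_indefinite_description.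
pose VS := fun S : alphabet => (foldr (fun nf acc => maxn (@vmax S nf.2) acc) 0 (lS S)).+1.
pose BS := fun S : alphabet => foldr (fun nf acc => maxn (@smax S nf.2) acc) 0 (lS S).
pose QS := fun S : alphabet => (foldr (fun nf acc => maxn (@qr S nf.2) acc) 0 (lS S)).+1.
pose Delta := fun (S : alphabet) n (f : fo S) => [/\ FO n f, qr f <= QS S & good (VS S) (BS S) f].
exists Delta; split.
- move=> S n f hf; split; first exact: hFO hf.
  + apply: leqW; exact: (In_foldr (fun nf => qr nf.2) (hlS _ _ _ hf)).
  + apply: good_max.
    * apply: leqW; exact: (In_foldr (fun nf => vmax nf.2) (hlS _ _ _ hf)).
    * exact: (In_foldr (fun nf => smax nf.2) (hlS _ _ _ hf)).
- by move=> S n f [].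
- move=> S n.
  set V := VS S; set B := BS S; set Q := QS S.
  pose ix := fun t : rtree S => index V B n Q pred0n t c0.
  have det : forall f t t', Delta S n f -> ix t = ix t' -> holds t f -> holds t' f.
    move=> f t t' [[fv so] hq hg] e; rewrite /holds.
    have hall : all pred0n (fo_fv f) by rewrite fv.
    by have [+ _] := E_sat hg so hq hall (index_E e); apply.
  pose Ps := fun f : fo S => [set i : idx S V B n Q | pb (exists t, ix t = i /\ holds t f)].
  have hPs : forall f t, Delta S n f -> (holds t f <-> ix t \in Ps f).
    move=> f t hf; rewrite inE; split.
    + by move=> h; apply/pbP; exists t.
    + by move=> /pbP [t' [e h]]; apply: det e h.
  have inh : inhabited (fo S) by constructor; exact: FRoot S 0.
  pose gP := fun P : {set idx S V B n Q} => epsilon inh (fun g => Delta S n g /\ Ps g = P).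
  exists (map gP (enum {set idx S V B n Q})) => f hf.
  have hg : Delta S n (gP (Ps f)) /\ Ps (gP (Ps f)) = Ps f.
    by apply: (epsilon_spec inh (fun g => Delta S n g /\ Ps g = Ps f)); exists f.
  exists (gP (Ps f)).
  + apply/In_map; exists (Ps f) => //; by rewrite mem_enum.
  + move=> t _; rewrite (hPs f t hf) (hPs _ t hg.1) hg.2; by [].
- move=> S mm T1 T2 [w1 [_ i1]] [w2 [_ i2]] hl f hf.
  set V := VS S; set B := BS S; set Q := QS S.
  have wT1 : WT mm T1 by split => // w k s /i1 [].
  have wT2 : WT mm T2 by split => // w k s /i2 [].
  have hQ : 0 < Q by [].
  have hV : 0 < V by [].
  have hRel : Rel V B Q T1 T2.
    move=> u; move: (hl u); case: (T1 u) => [[[k s]|i]|]; case: (T2 u) => [[[k' s']|j]|] //.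
    move=> [ek hs]; subst k'; split => //.
    set h := H pred0n (index V B k Q pred0n s c0).
    have hD : Delta S k h.
      have /andP[hg hso] := H_good hV pred0n (index V B k Q pred0n s c0).
      split => //; last by apply: H_qr; left.
      split => //; apply: all_pred0; exact: H_fv.
    have hs' := hs h hD (proj2 (HL V B k Q pred0n s c0 s c0) erefl).
    have := (proj1 (HL V B k Q pred0n s c0 s' c0)) hs'.
    by move=> e; apply: index_E; rewrite e.
  pose X0 := fun _ : nat => (([::] : seq (seq nat)), ([::] : seq nat)).
  have hInv : Inv V B T1 T2 Q pred0n X0 X0 by split.
  have hE := main (leqnn Q) wT1 wT2 hRel (fun z (h : pred0n z) => ltac:(by [])) hInv.
  have hE' : E V B mm Q pred0n (flat T1) c0 (flat T2) c0 by apply: E_ext hE _ _.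
  case: hf => -[fv so] hq hg; rewrite /holds.
  have hall : all pred0n (fo_fv f) by rewrite fv.
  by have [+ _] := E_sat hg so hq hall hE'; apply.
Qed.

Theorem theorem10p5 : FO_compositional false /\ FO_compositional true.
Proof. split; exact: compositional. Qed.
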